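(* Let $\mathbb{F}$ be an algebraically closed field (of any characteristic) and let $(\mathcal{O},*,n)$ be the Okubo algebra over $\mathbb{F}$. Let $f\in\mathcal{O}$ be an idempotent, $f*f=f\neq 0$, and define the product $x\cdot y=(f*x)*(y*f)$ on $\mathcal{O}$. Then the linear map \[ \tau:\mathcal{O}\to\mathcal{O},\qquad \tau(x)=f*(f*x), \] is an automorphism of order $3$ of both algebras $(\mathcal{O},* )$ and $(\mathcal{O},\cdot)$ (and it preserves $n$). Moreover, the subalgebra of elements fixed by $\tau$ coincides with the centralizer $\{x\in\mathcal{O}: x*f=f*x\}$ of $f$ in $(\mathcal{O},* )$.
   Context: The Okubo algebra over a field $\mathbb{F}$ is the $8$-dimensional vector space $\mathcal{O}$ with basis $\{x_a: a\in\mathbb{Z}_3^2,\ a\neq(0,0)\}$ and multiplication defined on basis elements as follows: for $a=(i,j)$, $b=(k,l)$, let $\Delta=il-jk\in\mathbb{Z}_3$; if $a+b=(0,0)$ then $x_a*x_b=0$; otherwise $x_a*x_b=x_{a+b}$ if $\Delta=0$, $x_a*x_b=0$ if $\Delta=1$, and $x_a*x_b=-x_{a+b}$ if $\Delta=2$. It carries the quadratic form $n$ with $n(x_a)=0$ for all $a$ and polar form $n(x,y)=n(x+y)-n(x)-n(y)$ given by $n(x_a,x_b)=1$ if $a+b=0$ and $0$ otherwise. (In characteristic $\neq3$ this algebra is isomorphic to $\mathfrak{sl}_3(\mathbb{F})$ with $x*y=\omega xy-\omega^2yx-\frac{\omega-\omega^2}{3}\mathrm{tr}(xy)1$, $\omega$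 a primitive cube root of $1$.) The algebra satisfies $n(x*y)=n(x)n(y)$, $n(x*y,z)=n(x,y*z)$ and $(x*y)*x=x*(y*x)=n(x)y$ for all $x,y,z$. *)

(* Defs.v *)
From HB Require Import structures.
From mathcomp Require Import all_boot all_order all_algebra.
Set Implicit Arguments. Unset Strict Implicit. Unset Printing Implicit Defensive.
Import GRing.Theory.
Local Open Scope ring_scope.

Definition Z3sq := ('Z_3 * 'Z_3)%type.
Definition okidx := {a : Z3sq | a != ((0 : 'Z_3), (0 : 'Z_3))}.

(* The Okubo algebra over F: coordinates w.r.t. the basis (x_a)_{a != 0}. *)
Notation okubo F := {ffun okidx -> F^o}.

Definition okdelta (a b : okidx) : 'Z_3 :=
  (val a).1 * (val b).2 - (val a).2 * (val b).1.

Definition okadd (a b : okidx) : Z3sq :=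
  ((val a).1 + (val b).1, (val a).2 + (val b).2).

(* Coefficient of x_c in x_a * x_b. *)
Definition okcoef (F : fieldType) (a b c : okidx) : F :=
  if okadd a b == val c then
    (if okdelta a b == 0 then 1
     else if okdelta a b == 1 then 0
     else -1)
  else 0.

Definition omul (F : fieldType) (x y : okubo F) : okubo F :=
  [ffun c => \sum_(a : okidx) \sum_(b : okidx) x a * y b * okcoef F a b c].

Definition onpolar (F : fieldType) (x y : okubo F) : F :=
  \sum_(a : okidx) \sum_(b : okidx)
     (if okadd a b == ((0 : 'Z_3), (0 : 'Z_3)) then x a * y b else 0).

(* Quadratic form: n(x_a)=0 for all a, polar form as above; hence
   n(x) = sum over unordered pairs {a,-a} of x_a x_{-a}.  We pick one
   representative of each pair via the code 3i+j. *)
Definition okcode (a : okidx) : nat := 3 * val (val a).1 + val (val a).2.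
Definition onorm (F : fieldType) (x : okubo F) : F :=
  \sum_(a : okidx) \sum_(b : okidx)
     (if (okadd a b == ((0 : 'Z_3), (0 : 'Z_3))) && (okcode a < okcode b)%N
      then x a * x b else 0).

Definition odot (F : fieldType) (f x y : okubo F) : okubo F :=
  omul (omul f x) (omul y f).

Definition otau (F : fieldType) (f x : okubo F) : okubo F := omul f (omul f x).

(* Main.v *)
Require Import Defs.
From HB Require Import structures.
From mathcomp Require Import all_boot all_order all_algebra.
Import GRing.Theory.
Local Open Scope ring_scope.
Definition mk (i j : nat) : Z3sq := (inZp i, inZp j).
Definition e (i j : nat) (h : mk i j != ((0 : 'Z_3), (0 : 'Z_3))) : okidx := exist _ (mk i j) h.
Definition e01 := @e 0 1 isT.
Definition e02 := @e 0 2 isT.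
Definition e10 := @e 1 0 isT.
Definition e11 := @e 1 1 isT.
Definition e12 := @e 1 2 isT.
Definition e20 := @e 2 0 isT.
Definition e21 := @e 2 1 isT.
Definition e22 := @e 2 2 isT.
Definition oklist := [:: e01; e02; e10; e11; e12; e20; e21; e22].
Lemma okidx_in (a : okidx) : a \in oklist.
Proof.
rewrite -(mem_map val_inj).
case: a => [[[[|[|[|m]]] Hi] [[|[|[|k]]] Hk]] h] //=.
Qed.
Lemma oklist_uniq : uniq oklist. Proof. by []. Qed.
Lemma sum_ok (F : fieldType) (g : okidx -> F) : \sum_(a : okidx) g a = g e01 + g e02 + g e10 + g e11 + g e12 + g e20 + g e21 + g e22.
Proof.
rewrite (eq_bigl (fun a => a \in oklist)); last by move=> a; rewrite okidx_in.
rewrite -big_uniq ?oklist_uniq // /oklist !big_cons big_nil /= !addrA addr0 //.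
Qed.
From mathcomp Require Import ring.
Definition okcoefZ (a b c : okidx) : int :=
  if okadd a b == val c then
    (if okdelta a b == 0 then 1
     else if okdelta a b == 1 then 0
     else -1)%R
  else 0%R.
Lemma okcoefE (F : fieldType) a b c : okcoef F a b c = (okcoefZ a b c)%:~R.
Proof. rewrite /okcoef /okcoefZ; do 3 (case: ifP => _) => //=; by rewrite ?rmorphN ?rmorph1. Qed.
Ltac evZ := repeat match goal with |- context [okcoefZ ?a ?b ?c] => let v := eval vm_compute in (okcoefZ a b c) in change (okcoefZ a b c) with v end.
Ltac okcomp := rewrite /omul ffunE !sum_ok !okcoefE; evZ; ring.
Lemma omul_e01 (F : fieldType) (x y : okubo F) : omul x y e01 = x e02 * y e02 - x e20 * y e11 - x e21 * y e10 - x e22 * y e12.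
Proof. okcomp. Qed.
Lemma omul_e02 (F : fieldType) (x y : okubo F) : omul x y e02 = x e01 * y e01 - x e10 * y e22 - x e11 * y e21 - x e12 * y e20.
Proof. okcomp. Qed.
Lemma omul_e10 (F : fieldType) (x y : okubo F) : omul x y e10 = - x e01 * y e12 - x e11 * y e02 + x e20 * y e20 - x e21 * y e22.
Proof. okcomp. Qed.
Lemma omul_e11 (F : fieldType) (x y : okubo F) : omul x y e11 = - x e01 * y e10 - x e12 * y e02 - x e20 * y e21 + x e22 * y e22.
Proof. okcomp. Qed.
Lemma omul_e12 (F : fieldType) (x y : okubo F) : omul x y e12 = - x e01 * y e11 - x e10 * y e02 + x e21 * y e21 - x e22 * y e20.
Proof. okcomp. Qed.
Lemma omul_e20 (F : fieldType) (x y : okubo F) : omul x y e20 = - x e02 * y e21 + x e10 * y e10 - x e12 * y e11 - x e22 * y e01.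
Proof. okcomp. Qed.
Lemma omul_e21 (F : fieldType) (x y : okubo F) : omul x y e21 = - x e02 * y e22 - x e11 * y e10 + x e12 * y e12 - x e20 * y e01.
Proof. okcomp. Qed.
Lemma omul_e22 (F : fieldType) (x y : okubo F) : omul x y e22 = - x e02 * y e20 - x e10 * y e12 + x e11 * y e11 - x e21 * y e01.
Proof. okcomp. Qed.
Ltac evB := repeat match goal with |- context [if ?b then _ else _] => (lazymatch b with true => fail | false => fail | _ => idtac end); let v := eval vm_compute in b in change b with v end; rewrite /=.
Lemma onpolarE (F : fieldType) (x y : okubo F) : onpolar x y = x e01 * y e02 + x e02 * y e01 + x e10 * y e20 + x e11 * y e22 + x e12 * y e21 + x e20 * y e10 + x e21 * y e12 + x e22 * y e11.
Proof. rewrite /onpolar !sum_ok; evB; ring. Qed.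
Lemma onormE (F : fieldType) (x : okubo F) : onorm x = x e01 * x e02 + x e10 * x e20 + x e11 * x e22 + x e12 * x e21.
Proof. rewrite /onorm !sum_ok; evB; ring. Qed.
Lemma ok_ind (P : okidx -> Prop) : P e01 -> P e02 -> P e10 -> P e11 -> P e12 -> P e20 -> P e21 -> P e22 -> forall c, P c.
Proof.
move=> H1 H2 H3 H4 H5 H6 H7 H8 c; have := okidx_in c; rewrite !inE.
by do ![case/orP=> [/eqP->//|]]; move/eqP->.
Qed.
Ltac okrw := rewrite ?(omul_e01, omul_e02, omul_e10, omul_e11, omul_e12, omul_e20, omul_e21, omul_e22).
Lemma ffD (F : fieldType) (f g : okubo F) c : (f + g) c = f c + g c. Proof. by rewrite ffunE. Qed.
Lemma ffZ (F : fieldType) k (f : okubo F) c : (k *: f) c = k * f c. Proof. by rewrite ffunE. Qed.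
Lemma ffN (F : fieldType) (f : okubo F) c : (- f) c = - f c. Proof. by rewrite ffunE. Qed.
Lemma ffB (F : fieldType) (f g : okubo F) c : (f - g) c = f c - g c. Proof. by rewrite ffD ffN. Qed.
Ltac okid := apply/ffunP; apply: ok_ind; rewrite ?ffB ?ffD ?ffZ ?ffN ?onpolarE ?onormE; okrw; rewrite ?ffB ?ffD ?ffZ ?ffN; ring.
Section Ids.
Context {F : fieldType}.
Implicit Types x y z : okubo F.
Lemma L1 x y z : omul (omul x y) z + omul (omul z y) x = onpolar x z *: y.
Proof. okid. Qed.
Lemma L2 x y z : omul x (omul y z) + omul z (omul y x) = onpolar x z *: y.
Proof. okid. Qed.
Lemma Q1 x y : omul (omul x y) x = onorm x *: y.
Proof. okid. Qed.
Lemma Q2 x y : omul x (omul y x) = onorm x *: y.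
Proof. okid. Qed.
Lemma Pa x y z : onpolar (omul x y) z = onpolar x (omul y z).
Proof. rewrite !onpolarE; okrw; ring. Qed.
Lemma Sy x y : onpolar x y = onpolar y x.
Proof. rewrite !onpolarE; ring. Qed.
Lemma Nm x y : onorm (omul x y) = onorm x * onorm y.
Proof. rewrite !onormE; okrw; ring. Qed.
Lemma Dp x : onpolar x x = 2%:R * onorm x.
Proof. rewrite !onpolarE onormE; ring. Qed.
Lemma omulDl x y z : omul (x + y) z = omul x z + omul y z. Proof. okid. Qed.
Lemma omulDr x y z : omul x (y + z) = omul x y + omul x z. Proof. okid. Qed.
Lemma omulZl (c : F) x y : omul (c *: x) y = c *: omul x y. Proof. okid. Qed.
Lemma omulZr (c : F) x y : omul x (c *: y) = c *: omul x y. Proof. okid. Qed.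
Lemma omulNl x y : omul (- x) y = - omul x y. Proof. okid. Qed.
Lemma omulNr x y : omul x (- y) = - omul x y. Proof. okid. Qed.
Lemma onpolarDl x y z : onpolar (x + y) z = onpolar x z + onpolar y z. Proof. rewrite !onpolarE ?ffB ?ffD ?ffZ ?ffN; ring. Qed.
Lemma onpolarZl (c : F) x y : onpolar (c *: x) y = c * onpolar x y. Proof. rewrite !onpolarE ?ffB ?ffD ?ffZ ?ffN; ring. Qed.
Lemma onpolarNl x y : onpolar (- x) y = - onpolar x y. Proof. rewrite !onpolarE ?ffB ?ffD ?ffZ ?ffN; ring. Qed.
End Ids.
Ltac vring := apply/ffunP => ?; rewrite ?(ffB, ffD, ffZ, ffN); ring.

Theorem proposition5p2 (F : closedFieldType) (f : okubo F)
  (hf_idem : omul f f = f) (hf_nz : f != 0) :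
  let tau := otau f in
  (* tau is linear and bijective *)
  (forall (c : F) (x y : okubo F), tau (c *: x + y) = c *: tau x + tau y) /\
  bijective tau /\
  (* automorphism of the algebra (O, star) *)
  (forall x y : okubo F, tau (omul x y) = omul (tau x) (tau y)) /\
  (* automorphism of the algebra (O, dot) *)
  (forall x y : okubo F, tau (odot f x y) = odot f (tau x) (tau y)) /\
  (* order exactly 3 *)
  (forall x : okubo F, tau (tau (tau x)) = x) /\
  (exists x : okubo F, tau x != x) /\
  (* tau preserves the norm n *)
  (forall x : okubo F, onorm (tau x) = onorm x) /\
  (* fixed points of tau = centralizer of f in (O, star) *)
  (forall x : okubo F, tau x = x <-> omul x f = omul f x).
Proof.
move=> tau; rewrite /tau.
have nf1 : onorm f = 1.
  have := Q1 f f; rewrite hf_idem hf_idem => H.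
  apply/eqP; rewrite -subr_eq0; apply/eqP.
  have : (onorm f - 1) *: f = 0 by rewrite scalerBl -H scale1r subrr.
  by move/eqP; rewrite scaler_eq0 (negbTE hf_nz) orbF => /eqP.
have A1 x : omul f (omul f x) = onpolar x f *: f - omul x f.
  by have := L2 f f x; rewrite hf_idem Sy => H; rewrite -H addrK.
have A2 x : omul (omul x f) f = onpolar x f *: f - omul f x.
  by have := L1 x f f; rewrite hf_idem => H; rewrite -H addrK.
have A3 x : omul f (omul x f) = x by rewrite Q2 nf1 scale1r.
have A4 x : omul (omul f x) f = x by rewrite Q1 nf1 scale1r.
have tf : onpolar f f = 2%:R by rewrite Dp nf1 mulr1.
have tL x : onpolar (omul f x) f = onpolar x f by rewrite Sy -Pa hf_idem Sy.
have L3 x : omul f (omul f (omul f x)) = onpolar x f *: f - x by rewrite A1 tL A4.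
have tau3 x : otau f (otau f (otau f x)) = x.
  rewrite /otau L3 L3 onpolarDl onpolarNl onpolarZl tf; vring.
have B1 x y : omul (omul x f) (omul y f) = onpolar x f *: y - omul f (omul y (omul x f)).
  by have := L2 (omul x f) y f; rewrite Pa hf_idem => H; rewrite -H addrK.
have B2 x y : omul y (omul x f) = onpolar y f *: x - omul f (omul x y).
  by have := L2 y x f => H; rewrite -H addrK.
have Hstar x y : otau f (omul x y) = omul (otau f x) (otau f y).
  rewrite /otau [omul f (omul f x)]A1 [omul f (omul f y)]A1.
  rewrite !omulDl !omulDr !omulNl !omulNr !omulZl !omulZr hf_idem A3 A2 B1 B2.
  rewrite !omulDr !omulNr !omulZr; vring.
have tauf : otau f f = f by rewrite /otau !hf_idem.
have Hfix x : otau f x = x <-> omul x f = omul f x.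
  rewrite /otau; split => H; first by rewrite -{1}H A4.
  by rewrite -H A3.
split.
  by move=> c x y; rewrite /otau !omulDr !omulZr.
split.
  by exists (fun x => otau f (otau f x)) => x; rewrite tau3.
split; first exact: Hstar.
split; first by move=> x y; rewrite /odot !Hstar tauf.
split; first exact: tau3.
split; last first.
  split; last exact: Hfix.
  by move=> x; rewrite /otau !Nm nf1 !mul1r.
have Fx u : otau f u = u -> onpolar u f *: (onpolar u f *: f - u) - omul u u = onorm u *: f.
  move=> Hu; have Hc := proj1 (Hfix u) Hu.
  have Lu : omul f u = onpolar u f *: f - u.
    by rewrite -L3; move: Hu; rewrite /otau => ->.
  by have := Q1 u f; rewrite Hc Lu omulDl omulNl omulZl -Lu.
pose u1 : okubo F := [ffun c => if c == e10 then (1 : F) else 0].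
pose u2 : okubo F := [ffun c => if c == e02 then (1 : F) else 0].
case: (boolP (otau f u1 == u1)) => [/eqP H1|H1]; last by exists u1.
case: (boolP (otau f u2 == u2)) => [/eqP H2|H2]; last by exists u2.
exfalso.
move: (Fx _ H1) (Fx _ H2) => /ffunP E1 /ffunP E2.
move: (E1 e20) (E1 e01) (E2 e01); rewrite ?(ffB, ffD, ffZ, ffN) !onpolarE !onormE; okrw.
rewrite /u1 /u2 !ffunE; evB.
rewrite !(mul0r, mulr0, mul1r, mulr1, add0r, addr0, subr0, sub0r, oppr0).
move=> h1 h2 h3.
have nz : f e20 != 0.
  apply/eqP => h0; move: h1; rewrite h0 !mul0r sub0r => /eqP.
  by rewrite oppr_eq0 oner_eq0.
move/eqP: h2; rewrite !mulf_eq0 (negbTE nz) /= => /eqP h01.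
by move: h3; rewrite h01 !mul0r sub0r => /eqP; rewrite oppr_eq0 oner_eq0.
Qed.
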